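(* Let $G$ be a connected graph and let $G_\pi$ be a signed graph with underlying graph $G$ that is not balanced. Then there exists a spanning proper subgraph $H$ of $G$ (i.e. $V(H)=V(G)$ and $E(H)\subsetneq E(G)$) such that $\lambda_1(G_\pi)<\rho(H)$.
   Context: All graphs are finite, simple and undirected. A signed graph $G_\pi$ is a pair $(G,\pi)$ with $G=(V,E)$ a graph and $\pi:E\to\{+1,-1\}$. Its adjacency matrix $A(G_\pi)=(A_{ij})$ is the symmetric matrix with $A_{ij}=\pi(\{i,j\})$ if $\{i,j\}\in E$ and $A_{ij}=0$ otherwise; its eigenvalues $\lambda_1(G_\pi)\ge\cdots\ge\lambda_n(G_\pi)$ are those of $A(G_\pi)$. Two signed graphs $G_\pi,G_{\pi'}$ on the same graph are switching equivalent if $A(G_{\pi'})=D^{-1}A(G_\pi)D$ for some diagonal matrix $D$ with diagonal entries $\pm1$. $G_+$ denotes the signing with all signs $+1$. $G_\pi$ is balanced if it is switching equivalent to $G_+$. $\rho(H)$ denotes the spectral radius (largest modulus of an eigenvalue) of the adjacency matrix of a graph $H$. *)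

(* Defs.v *)
From mathcomp Require Import all_boot all_order all_algebra.
Set Implicit Arguments. Unset Strict Implicit. Unset Printing Implicit Defensive.
Import Order.TTheory GRing.Theory Num.Theory.
Local Open Scope ring_scope.

Definition simple_graph (n : nat) (G : rel 'I_n) : Prop :=
  (forall i j, G i j = G j i) /\ (forall i, ~~ G i i).

Definition connected_graph (n : nat) (G : rel 'I_n) : Prop :=
  (0 < n)%N /\ forall i j, connect G i j.

Definition signing (R : nzRingType) (n : nat) (G : rel 'I_n) (pi : 'I_n -> 'I_n -> R)
  : Prop :=
  forall i j, G i j -> (pi i j = 1 \/ pi i j = -1) /\ pi i j = pi j i.

Definition signed_adj (R : nzRingType) (n : nat) (G : rel 'I_n) (pi : 'I_n -> 'I_n -> R)
  : 'M[R]_n := \matrix_(i, j) (if G i j then pi i j else 0).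

Definition adj (R : nzRingType) (n : nat) (G : rel 'I_n) : 'M[R]_n :=
  signed_adj G (fun _ _ => 1).

Definition switching_equiv (R : comUnitRingType) (n : nat) (A A' : 'M[R]_n) : Prop :=
  exists d : 'I_n -> R, (forall i, d i = 1 \/ d i = -1) /\
    A' = invmx (diag_mx (\row_i d i)) *m A *m diag_mx (\row_i d i).

Definition balanced (R : comUnitRingType) (n : nat) (G : rel 'I_n)
  (pi : 'I_n -> 'I_n -> R) : Prop :=
  switching_equiv (signed_adj G pi) (adj R G).

Definition is_lambda1 (R : realFieldType) (n : nat) (A : 'M[R]_n) (l : R) : Prop :=
  eigenvalue A l /\ forall a, eigenvalue A a -> a <= l.

Definition is_spectral_radius (R : realFieldType) (n : nat) (A : 'M[R]_n) (r : R)
  : Prop :=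
  (exists a, eigenvalue A a /\ `|a| = r) /\ forall a, eigenvalue A a -> `|a| <= r.

(* Main.v *)
Require Import Defs.
From mathcomp Require Import all_boot all_order all_algebra.
From mathcomp Require Import complex.
From mathcomp Require Import ring.
From Stdlib Require Import Classical.
Import Order.TTheory GRing.Theory Num.Theory.
Set Implicit Arguments. Unset Strict Implicit. Unset Printing Implicit Defensive.
Local Open Scope ring_scope.
Local Open Scope sesquilinear_scope.

Section K.
Variable R : rcfType.
Local Notation C := (R[i]).
Local Notation f := (real_complex R).

Lemma f_real (x : R) : f x \is Num.real.
Proof. by apply/complex_realP; exists x. Qed.

Lemma map_tC m n (M : 'M[R]_(m,n)) : (map_mx f M) ^t* = map_mx f (M^T).
Proof. by apply/matrixP => i j; rewrite !mxE conj_Creal ?f_real. Qed.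

Lemma rayleigh_eig n (B : 'M[R]_n) (y : 'rV[R]_n) (mu : R) :
  B^T = B -> mu * (y *m y^T) 0 0 < (y *m B *m y^T) 0 0 ->
  exists a, eigenvalue B a /\ mu < a.
Proof.
move=> Bsym Hlt.
set Bc := map_mx f B.
have hBc : Bc \is hermsymmx.
  apply: realsym_hermsym.
    by apply/is_hermitianmxP; rewrite expr0 scale1r map_mx_id // /Bc map_trmx Bsym.
  by apply/mxOverP => i j; rewrite mxE f_real.
have hP := orthomx_spectralP (hermitian_normalmx hBc).
set P := spectralmx Bc in hP.
set d := spectral_diag Bc in hP.
have Pu : P \is unitarymx := spectral_unitarymx Bc.
have dreal : d \is a realmx := hermitian_spectral_diag_real hBc.
set yc := map_mx f y.
set z := yc *m P^t*.
have e1 : f ((y *m B *m y^T) 0 0) = \sum_k d 0 k * (z 0 k * (z 0 k)^*).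
  have -> : f ((y *m B *m y^T) 0 0) = (yc *m Bc *m yc^t*) 0 0.
    by rewrite /yc /Bc map_tC -!map_mxM [RHS]mxE.
  rewrite hP invmx_unitary // !mulmxA -/z.
  have -> : yc *m P^t* *m diag_mx d *m P *m yc^t* = z *m diag_mx d *m z^t*.
    rewrite -[LHS]mulmxA; congr (_ *m _).
    by rewrite /z trmx_mul map_mxM trmxCK.
  rewrite mxE; apply: eq_bigr => k _.
  by rewrite mul_mx_diag !mxE mulrAC mulrC.
have e2 : f ((y *m y^T) 0 0) = \sum_k (z 0 k * (z 0 k)^*).
  have -> : f ((y *m y^T) 0 0) = (yc *m yc^t*) 0 0.
    by rewrite /yc map_tC -!map_mxM [RHS]mxE.
  have -> : yc *m yc^t* = z *m z^t*.
    by rewrite /z trmx_mul map_mxM trmxCK mulmxA mulmxKtV.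
  by rewrite mxE; apply: eq_bigr => k _; rewrite !mxE.
case: (posnP n) => [n0|npos].
  by subst n; move: Hlt; rewrite !mxE !big_ord0 mulr0 ltxx.
have dr : forall k, d 0 k \is Num.real by move=> k; apply: (mxOverP dreal).
pose k0 := Ordinal npos.
have [km _ kmax] := @real_arg_maxP _ _ k0 xpredT (fun k => d 0 k) isT (fun k _ => dr k).
have ineq : f ((y *m B *m y^T) 0 0) <= d 0 km * f ((y *m y^T) 0 0).
  rewrite e1 e2 mulr_sumr; apply: ler_sum => k _.
  by apply: ler_wpM2r; [rewrite -normCK exprn_ge0 | exact: kmax].
have [r dre] : exists r, d 0 km = f r by apply/complex_realP.
have ineqR : (y *m B *m y^T) 0 0 <= r * (y *m y^T) 0 0.
  by rewrite -lecR rmorphM /= -dre.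
exists r; split.
  rewrite eigenvalue_root_char -(fmorph_root f) map_char_poly -/Bc.
  suff: root (char_poly Bc) (d 0 km) by rewrite dre.
  rewrite -eigenvalue_root_char.
  apply/eigenvalueP; exists (row km P).
    have PB : P *m Bc = diag_mx d *m P.
      by rewrite {1}hP !mulmxA mulmxV ?spectral_unit // mul1mx.
    by rewrite rowE -mulmxA PB mulmxA -rowE -rowE row_diag_mx -scalemxAl -rowE.
  apply/negP => /eqP h0.
  have := congr1 (fun M => M *m P^t*) h0; rewrite /= mul0mx -row_mul (unitarymxP Pu) row1.
  by move/rowP/(_ km); rewrite !mxE !eqxx /= => /eqP; rewrite oner_eq0.
have yy0 : 0 <= (y *m y^T) 0 0.
  by rewrite mxE sumr_ge0 // => k _; rewrite mxE -expr2 sqr_ge0.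
rewrite ltNge; apply/negP => rmu.
have := lt_le_trans Hlt ineqR; rewrite ltNge => /negP; apply; exact: ler_wpM2r.
Qed.
End K.

Close Scope sesquilinear_scope.
Local Open Scope ring_scope.

Section Main.
Variable R : rcfType.
Variable n : nat.

Definition qf (M : 'M[R]_n) (y : 'I_n -> R) := \sum_i \sum_j y i * M i j * y j.
Definition nf (y : 'I_n -> R) := \sum_i y i * y i.

Lemma qfE M (y : 'rV[R]_n) : (y *m M *m y^T) 0 0 = qf M (fun i => y 0 i).
Proof.
rewrite mxE /qf exchange_big; apply: eq_bigr => j _ /=.
rewrite !mxE mulr_suml; apply: eq_bigr => i _; by rewrite ?mxE.
Qed.

Lemma nfE (y : 'rV[R]_n) : (y *m y^T) 0 0 = nf (fun i => y 0 i).
Proof. by rewrite mxE; apply: eq_bigr => i _; rewrite !mxE. Qed.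

Lemma K' (B : 'M[R]_n) (y : 'I_n -> R) mu : B^T = B -> mu * nf y < qf B y ->
  exists a, eigenvalue B a /\ mu < a.
Proof.
move=> Bs h; apply: (@rayleigh_eig R n B (\row_i y i) mu Bs).
rewrite qfE nfE; move: h; congr (_ * _ < _).
  by rewrite /nf; apply: eq_bigr => i _; rewrite !mxE.
by rewrite /qf; apply: eq_bigr => i _; apply: eq_bigr => j _; rewrite !mxE.
Qed.

Lemma ltr_sum_ex (F G : 'I_n -> R) : (forall i, F i <= G i) -> (exists i, F i < G i) ->
  \sum_i F i < \sum_i G i.
Proof.
move=> le [i lt]; rewrite (bigD1 i) // [X in _ < X](bigD1 i) //=.
by apply: ltr_leD => //; apply: ler_sum => k _.
Qed.

Lemma spec_lt (H : rel 'I_n) l0 y : (forall i j, H i j = H j i) ->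
  l0 * nf y < qf (adj R H) y ->
  forall r, is_spectral_radius (adj R H) r -> l0 < r.
Proof.
move=> Hs h r [_ rmax].
have [|a [ea lta]] := K' _ h; first by apply/matrixP => i j; rewrite !mxE Hs.
exact: (lt_le_trans lta (le_trans (ler_norm a) (rmax a ea))).
Qed.

Lemma finish (A : 'M[R]_n) l0 (H : rel 'I_n) : is_lambda1 A l0 ->
  (forall r, is_spectral_radius (adj R H) r -> l0 < r) ->
  forall l r, is_lambda1 A l -> is_spectral_radius (adj R H) r -> l < r.
Proof.
move=> [e0 m0] h l r [e m] hr.
have -> : l = l0 by apply: le_anti; rewrite m0 // m.
exact: h.
Qed.

Definition ep (u v i j : 'I_n) := ((i == u) && (j == v)) || ((i == v) && (j == u)).
Definition rm (G : rel 'I_n) (u v : 'I_n) : rel 'I_n := fun i j => G i j && ~~ ep u v i j.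

Lemma ep_sym u v i j : ep u v i j = ep u v j i.
Proof. by rewrite /ep orbC andbC [X in _ || X]andbC. Qed.

Lemma rm_ok (G : rel 'I_n) u v : simple_graph G -> G u v ->
  [/\ simple_graph (rm G u v), (forall i j, rm G u v i j -> G i j) &
      exists i j, G i j && ~~ rm G u v i j].
Proof.
move=> [Gs Gi] Guv; split.
- split; first by move=> i j; rewrite /rm Gs ep_sym.
  by move=> i; rewrite /rm (negbTE (Gi i)).
- by move=> i j /andP[].
- by exists u, v; rewrite /rm /ep !eqxx Guv.
Qed.


Section Graph.
Variables (G : rel 'I_n) (pi : 'I_n -> 'I_n -> R).
Local Notation A := (signed_adj G pi).

Lemma A_sym : (forall i j, G i j = G j i) -> signing G pi ->
  forall i j, A i j = A j i.
Proof.
move=> Gs sgn i j; rewrite !mxE Gs; case: ifP => // Gji.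
by have [_ ->] := sgn j i Gji.
Qed.

Lemma term_le0 (sgn : signing G pi) (x : 'I_n -> R) i j :
  x i * A i j * x j <= `|x i| * (if G i j then 1 else 0) * `|x j|.
Proof.
rewrite mxE; case: ifP => Gij; last by rewrite !mulr0 !mul0r.
have [hp _] := sgn i j Gij.
have -> : `|x i| * 1 * `|x j| = `|x i * pi i j * x j|.
  by rewrite !normrM; case: hp => ->; rewrite ?normrN normr1.
exact: ler_norm.
Qed.

Lemma adj_rm u v i j : adj R (rm G u v) i j = if G i j && ~~ ep u v i j then 1 else 0.
Proof. by rewrite !mxE. Qed.

Lemma term_nonneg (y : 'I_n -> R) (H : rel 'I_n) i j :
  0 <= `|y i| * adj R H i j * `|y j|.
Proof. by rewrite mxE; case: ifP => _; rewrite ?mulr1 ?mulr0 ?mul0r // mulr_ge0. Qed.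

Lemma term_le (sgn : signing G pi) (x : 'I_n -> R) u v i j :
  (ep u v i j -> x i * A i j * x j <= 0) ->
  x i * A i j * x j <= `|x i| * adj R (rm G u v) i j * `|x j|.
Proof.
move=> hep; case E: (ep u v i j).
  exact: le_trans (hep E) (term_nonneg _ _ _ _).
by rewrite adj_rm E andbT; apply: term_le0.
Qed.

Lemma qf_le (sgn : signing G pi) (x : 'I_n -> R) u v :
  (forall i j, ep u v i j -> x i * A i j * x j <= 0) ->
  qf A x <= qf (adj R (rm G u v)) (fun i => `|x i|).
Proof.
move=> hep; apply: ler_sum => i _; apply: ler_sum => j _.
exact: term_le (hep i j).
Qed.

Lemma qf_lt (sgn : signing G pi) (x : 'I_n -> R) u v :
  (forall i j, ep u v i j -> x i * A i j * x j <= 0) ->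
  x u * A u v * x v < 0 ->
  qf A x < qf (adj R (rm G u v)) (fun i => `|x i|).
Proof.
move=> hep huv; apply: ltr_sum_ex.
  by move=> i; apply: ler_sum => j _; apply: term_le (hep i j).
exists u; apply: ltr_sum_ex.
  by move=> j; apply: term_le (hep u j).
exists v; exact: lt_le_trans huv (term_nonneg _ _ _ _).
Qed.


Lemma pi_nz (sgn : signing G pi) i j : G i j -> pi i j != 0.
Proof.
move=> Gij; have [[->|->] _] := sgn i j Gij; first exact: oner_neq0.
by rewrite oppr_eq0 oner_neq0.
Qed.

Lemma bal (sgn : signing G pi) (x : 'I_n -> R) :
  (forall i, x i != 0) -> (forall i j, G i j -> 0 < x i * A i j * x j) ->
  balanced G pi.
Proof.
move=> xnz hpos.
have sgpm : forall i, Num.sg (x i) = 1 \/ Num.sg (x i) = -1.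
  move=> i; case: (ltgtP (x i) 0) => h.
  - by right; rewrite ltr0_sg.
  - by left; rewrite gtr0_sg.
  - by move: (xnz i); rewrite h eqxx.
exists (fun i => Num.sg (x i)); split => //.
set D := diag_mx _.
have DD : D *m D = 1%:M.
  apply/matrixP => i j; rewrite mul_diag_mx !mxE.
  case: (eqVneq i j) => [->|ij]; last by rewrite mulr0n mulr0.
  by rewrite !mulr1n; case: (sgpm j) => ->; rewrite ?mulr1 ?mulrNN ?mulr1.
have Du : D \in unitmx by have [] := mulmx1_unit DD.
have -> : invmx D = D by rewrite -[invmx D]mulmx1 -DD mulmxA mulVmx ?mul1mx.
apply/matrixP => i j; rewrite mul_mx_diag mul_diag_mx !mxE.
case: ifP => Gij; last by rewrite mulr0 mul0r.
have := hpos i j Gij; rewrite mxE Gij => /gtr0_sg; rewrite !sgrM.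
have [hp _] := sgn i j Gij.
have -> : Num.sg (pi i j) = pi i j by case: hp => ->; rewrite ?sgr1 ?sgrN1.
by move=> <-.
Qed.

Lemma conn_edge (x : 'I_n -> R) u t : connect G u t -> x u = 0 -> x t != 0 ->
  exists a b, [/\ G a b, x a = 0 & x b != 0].
Proof.
move/connectP => [p pth ->]; elim: p u pth => [|a p IH] u /= pth xu0 xt.
  by rewrite xu0 eqxx in xt.
move/andP: pth => [Gua pth].
case: (eqVneq (x a) 0) => [xa0|xa]; first exact: IH pth xa0 xt.
by exists u, a.
Qed.

End Graph.

Lemma adj_ge0 (H : rel 'I_n) i j : 0 <= adj R H i j.
Proof. by rewrite mxE; case: ifP. Qed.

Lemma nf_abs (x : 'I_n -> R) : nf (fun i => `|x i|) = nf x.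
Proof. by apply: eq_bigr => i _; rewrite -!expr2 real_normK ?num_real. Qed.

Lemma nf_pert (x : 'I_n -> R) a e : x a = 0 ->
  nf (fun i => `|x i| + (if i == a then e else 0)) = nf x + e * e.
Proof.
move=> xa; rewrite /nf (bigD1 a) //= [in RHS](bigD1 a) //= eqxx xa normr0 add0r mul0r add0r addrC.
congr (_ + _); apply: eq_bigr => i ia.
by rewrite (negbTE ia) addr0 -!expr2 real_normK ?num_real.
Qed.

Lemma qf_pert (H : rel 'I_n) (x : 'I_n -> R) a e : 0 <= e -> x a = 0 ->
  qf (adj R H) (fun i => `|x i|) + e * \sum_j adj R H a j * `|x j| <=
  qf (adj R H) (fun i => `|x i| + (if i == a then e else 0)).
Proof.
move=> e0 xa; rewrite /qf (bigD1 a) //= [X in _ <= X](bigD1 a) //=.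
rewrite big1 ?add0r; last by move=> j _; rewrite xa normr0 !mul0r.
rewrite addrC; apply: lerD.
  apply: ler_sum => i ia; apply: ler_sum => j _; rewrite (negbTE ia) addr0.
  by apply: ler_wpM2l; [rewrite mulr_ge0 ?adj_ge0 | rewrite lerDl; case: ifP].
rewrite mulr_sumr; apply: ler_sum => j _; rewrite eqxx xa normr0 add0r mulrA.
by apply: ler_wpM2l; [rewrite mulr_ge0 ?adj_ge0 | rewrite lerDl; case: ifP].
Qed.

End Main.

Theorem mainTheorem1 (R : rcfType) (n : nat) (G : rel 'I_n)
    (pi : 'I_n -> 'I_n -> R) :
  simple_graph G -> connected_graph G -> signing G pi -> ~ balanced G pi ->
  exists H : rel 'I_n,
    [/\ simple_graph H,
        (forall i j, H i j -> G i j),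
        (exists i j, G i j && ~~ H i j) &
        forall l r, is_lambda1 (signed_adj G pi) l ->
                    is_spectral_radius (adj R H) r -> l < r].
Proof.
move=> sg cg sgn nb.
have [Gs Gi] := sg; have [npos Gconn] := cg.
have [u0 [v0 Guv0]] : exists u v, G u v.
  apply: NNPP => hne; apply: nb; exists (fun=> 1); split; first by left.
  have A0 : forall p : 'I_n -> 'I_n -> R, signed_adj G p = 0.
    move=> p; apply/matrixP => i j; rewrite !mxE; case: ifP => // Gij.
    by exfalso; apply: hne; exists i, j.
  by rewrite /adj !A0 mulmx0 mul0mx.
have build : forall a b, G a b ->
    (forall l0, is_lambda1 (signed_adj G pi) l0 ->
      forall r, is_spectral_radius (adj R (rm G a b)) r -> l0 < r) ->
    exists H : rel 'I_n,
    [/\ simple_graph H,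
        (forall i j, H i j -> G i j),
        (exists i j, G i j && ~~ H i j) &
        forall l r, is_lambda1 (signed_adj G pi) l ->
                    is_spectral_radius (adj R H) r -> l < r].
  move=> a b Gab hsp; have [h1 h2 h3] := rm_ok sg Gab.
  exists (rm G a b); split => // l r hl; exact: hsp.
case: (classic (exists l0, is_lambda1 (signed_adj G pi) l0)) => [[l0 hl0]|nol]; last first.
  apply: (build u0 v0 Guv0) => l0 hl; by exfalso; apply: nol; exists l0.
have [eig0 _] := hl0.
have [xr xA xr0] := eigenvalueP eig0.
pose x i := xr 0 i.
have qfx : qf (signed_adj G pi) x = l0 * nf x.
  by rewrite -qfE xA -scalemxAl [LHS]mxE nfE.
have colx : forall u, \sum_k x k * signed_adj G pi k u = l0 * x u.
  by move=> u; have := congr1 (fun M : 'rV[R]_n => M 0 u) xA; rewrite [X in X = _ -> _]mxE [X in _ = X -> _]mxE.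
have [t xt] : exists t, x t != 0.
  apply: NNPP => h; move/eqP: xr0; apply; apply/rowP => i; rewrite mxE.
  by case: (eqVneq (xr 0 i) 0) => // hi; exfalso; apply: h; exists i.
case: (pickP (fun u => x u == 0)) => [u /eqP xu0 | allnz].
  have [a [b [Gab xa0 xb]]] := conn_edge (Gconn u t) xu0 xt.
  have [w [Gaw wb xw]] : exists w, [/\ G a w, w != b & x w != 0].
    apply: NNPP => hno.
    have := colx a; rewrite xa0 mulr0 (bigD1 b) //= big1 ?addr0.
      have Gba : G b a by rewrite Gs.
      rewrite mxE Gba => /eqP; rewrite mulf_eq0 (negbTE xb) /=.
      by rewrite (negbTE (pi_nz sgn Gba)).
    move=> k kb; rewrite mxE; case: ifP => Gka; last by rewrite mulr0.
    case: (eqVneq (x k) 0) => [->|xk]; first by rewrite mul0r.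
    by exfalso; apply: hno; exists k; split => //; rewrite Gs.
  apply: (build a b Gab) => l1 hl1.
  have -> : l1 = l0 by case: hl1 => e1 m1; case: hl0 => e m; apply: le_anti; rewrite m1 // m.
  apply: (spec_lt (y := fun i => `|x i| + (if i == (a : 'I_n) then
     (\sum_j adj R (rm G a b) a j * `|x j|) / (`|l0| + 1) else 0))).
    by move=> i j; rewrite /rm Gs ep_sym.
  set S := \sum_j _.
  have ab : a != b by apply: contraTneq Gab => ->; rewrite Gi.
  have Spos : 0 < S.
    rewrite /S (bigD1 w) //= adj_rm Gaw /ep eqxx (negbTE wb) /=.
    have -> : (w == a) = false by apply/negbTE; apply: contraTneq Gaw => ->; rewrite Gi.
    rewrite andbF /= mul1r; apply: ltr_pwDl; first by rewrite normr_gt0.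
    by apply: sumr_ge0 => j _; rewrite mulr_ge0 ?adj_ge0.
  set e := S / (`|l0| + 1).
  have l1pos : 0 < `|l0| + 1 by rewrite ltr_pwDr.
  have epos : 0 < e by rewrite divr_gt0.
  have eS : e * (`|l0| + 1) = S by rewrite /e divfK // gt_eqF.
  rewrite nf_pert //.
  apply: (lt_le_trans _ (@qf_pert R n (rm G a b) x a e (ltW epos) xa0)).
  have hq : l0 * nf x <= qf (adj R (rm G a b)) (fun i => `|x i|).
    rewrite -qfx; apply: qf_le => // i j /orP[] /andP[/eqP-> /eqP->].
      by rewrite xa0 !mul0r.
    by rewrite xa0 mulr0.
  rewrite mulrDr addrC [X in _ < X]addrC; apply: ltr_leD => //.
  apply: (le_lt_trans (y := `|l0| * (e * e))).
    by apply: ler_wpM2r; [rewrite mulr_ge0 // ltW | exact: ler_norm].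
  have -> : e * S = `|l0| * (e * e) + e * e by rewrite -eS; ring.
  by rewrite ltrDl mulr_gt0.
case: (pickP (fun p : 'I_n * 'I_n => G p.1 p.2 && (x p.1 * signed_adj G pi p.1 p.2 * x p.2 < 0))) => [[a b] /= /andP[Gab hneg] | nopos].
  apply: (build a b Gab) => l1 hl1.
  have -> : l1 = l0 by case: hl1 => e1 m1; case: hl0 => e m; apply: le_anti; rewrite m1 // m.
  apply: (spec_lt (y := fun i => `|x i|)); first by move=> i j; rewrite /rm Gs ep_sym.
  rewrite nf_abs -qfx; apply: (@qf_lt R n G pi sgn x a b) => //.
  move=> i j /orP[] /andP[/eqP-> /eqP->]; first exact: ltW.
  rewrite (A_sym Gs sgn).
  have -> : x b * signed_adj G pi a b * x a = x a * signed_adj G pi a b * x b by ring.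
  exact: ltW.
exfalso; apply: nb; apply: (bal sgn (x := x)).
  by move=> i; rewrite allnz.
move=> i j Gij; have := nopos (i, j); rewrite /= Gij /= => /negbT; rewrite -leNgt => h.
rewrite lt_def h andbT !mulf_eq0 !allnz /= mxE Gij.
by rewrite orbF (pi_nz sgn Gij).
Qed.
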